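(* Let $G$ be a plane triangulation whose geometric dual $G^*$ admits a $2$-factor consisting of at most two cycles. Then $\chi_1(G) = 2$.
   Context: All graphs are finite and simple. A mapping $f : V(G) \to E(G) \cup \{\emptyset\}$ is a $1$-selection of $G$ if for every $v \in V(G)$ either $f(v)$ is an edge incident with $v$ or $f(v) = \emptyset$. The graph $G_f$ is obtained from $G$ by deleting all edges in $f(V(G))$. The robust chromatic number is $\chi_1(G) = \min_f \chi(G_f)$ over all $1$-selections $f$ of $G$. A plane triangulation is a simple plane graph in which every face is bounded by a $3$-cycle. The geometric dual $G^*$ of a plane graph $G$ has a vertex for each face of $G$ and, for each edge $e$ of $G$, an edge joining the vertices corresponding to the two faces incident with $e$ (it may be a multigraph). A $2$-factor is a $2$-regular spanning subgraph. *)

(* Defs.v *)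
(* Plane graphs are represented combinatorially by rotation
   systems (combinatorial maps): darts D, a fixed-point-free involution
   [alpha] (the two darts of an edge), a permutation [sigma] whose orbits are
   the darts around each vertex, and faces = orbits of [phi = sigma \o alpha].
   A connected map is plane (genus 0) iff Euler's formula V - E + F = 2 holds. *)
From mathcomp Require Import all_boot all_order.
From mathcomp Require Import fingroup perm.
Set Implicit Arguments. Unset Strict Implicit. Unset Printing Implicit Defensive.

Section Defs.
Variables (V D : finType) (tail : D -> V) (alpha sigma : {perm D}).

Definition phi (d : D) : D := sigma (alpha d).

Definition adj : rel V :=
  fun u v => [exists d, (tail d == u) && (tail (alpha d) == v)].

Definition nfaces : nat := fcard phi D.
Definition nedges : nat := #|D| %/ 2.

Definition plane_triangulation : Prop :=
  (forall d, alpha (alpha d) = d /\ alpha d != d) /\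
      (forall d d', (tail d == tail d') = fconnect sigma d d') /\
      (forall v, exists d, tail d = v) /\
      (forall d, tail (alpha d) != tail d) /\
      (forall d d', tail d = tail d' -> tail (alpha d) = tail (alpha d') -> d = d') /\
                                                                (* no multiple edges *)
      (forall u v, connect adj u v) /\
      #|V| + nfaces = nedges + 2 /\                            (* Euler: genus 0 *)
      (forall d, fingraph.order phi d = 3).

(* Geometric dual: vertices = faces (phi-orbits), one edge per edge of G
   (alpha-orbit {d, alpha d}) joining the face of d and the face of alpha d.
   A spanning subgraph of G* is a set S of darts closed under alpha (the set of
   darts of the selected edges); the degree of the face of d is the number of
   darts of S on that face (a loop counts twice). *)
Definition dual_two_factor (S : {set D}) : Prop :=
  (forall d, (alpha d \in S) = (d \in S)) /\
  (forall d, #|[set d' in S | fconnect phi d d']| = 2).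

(* connectivity of the subgraph S of G*, lifted to darts *)
Definition dual_sub_rel (S : {set D}) : rel D :=
  fun d d' => fconnect phi d d' || ((d \in S) && (d' == alpha d)).

Definition dual_ncomp (S : {set D}) : nat := n_comp (dual_sub_rel S) D.

End Defs.

Section Chromatic.
Variable V : finType.

Definition colorable (k : nat) (e : rel V) : bool :=
  [exists c : {ffun V -> 'I_k}, [forall u, forall v, e u v ==> (c u != c v)]].

Lemma colorable_card (e : rel V) : irreflexive e -> exists k, colorable k e.
Proof.
move=> irr; exists #|V|; apply/existsP; exists [ffun v => enum_rank v].
apply/forallP=> u; apply/forallP=> v; apply/implyP=> euv.
rewrite !ffunE; apply/negP=> /eqP /enum_rank_inj Euv.
by move: euv; rewrite Euv irr.
Qed.

(* chromatic number of a loopless graph; for a relation with a loop (never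
   used) it is defined via the symmetric-irreflexive part. *)
Definition irr_part (e : rel V) : rel V := fun u v => (u != v) && e u v.

Lemma irr_part_irr (e : rel V) : irreflexive (irr_part e).
Proof. by move=> u; rewrite /irr_part eqxx. Qed.

Definition chi (e : rel V) : nat :=
  ex_minn (colorable_card (irr_part_irr e)).

(* 1-selections: f v = Some u means f selects the edge vu (incident with v). *)
Definition one_selection (e : rel V) (f : {ffun V -> option V}) : bool :=
  [forall v, if f v is Some u then e v u else true].

Definition del_sel (e : rel V) (f : {ffun V -> option V}) : rel V :=
  fun u v => [&& e u v, f u != Some v & f v != Some u].

Lemma chi1_ex (e : rel V) :
  exists k, [exists f, one_selection e f && (chi (del_sel e f) == k)].
Proof.
exists (chi (del_sel e [ffun=> None])); apply/existsP; exists [ffun=> None].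
rewrite eqxx andbT; apply/forallP=> v; by rewrite ffunE.
Qed.

Definition chi1 (e : rel V) : nat := ex_minn (chi1_ex e).

End Chromatic.

(* Main.v *)
Require Import Defs.
From mathcomp Require Import all_boot all_order all_algebra fingroup perm.
From mathcomp Require Import zify.
Set Implicit Arguments. Unset Strict Implicit. Unset Printing Implicit Defensive.
Import GRing.Theory.
Local Open Scope ring_scope.

Definition F2 : fieldType := 'F_2.

Lemma F2_add (x : F2) : x + x = 0.
Proof. exact: (addrr_pchar2 (pchar_Fp (isT : prime 2))). Qed.

Lemma F2_opp (x : F2) : - x = x.
Proof. by apply/eqP; rewrite eq_sym -subr_eq0 opprK F2_add. Qed.

Lemma mxrank_add_le (m1 n1 : nat) (A B : 'M[F2]_(m1, n1)) :
  (\rank (A + B)%R <= \rank A + \rank B)%N.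
Proof.
have h1 : (\rank (A + B)%R <= \rank (A + B)%MS)%N.
  by apply: mxrankS; apply: addmx_sub_adds; apply: submx_refl.
apply: (leq_trans h1); by case: (mxrank_adds_leqif A B).
Qed.

Lemma rank_rows_set (m1 n1 : nat) (P : {set 'I_m1}) (A : 'M[F2]_(m1, n1)) :
  (forall i, i \notin P -> row i A = 0) -> (\rank A <= #|P|)%N.
Proof.
move=> h0.
set R := \matrix_(k < #|P|) row (enum_val k) A.
apply: leq_trans (rank_leq_row R); apply: mxrankS; apply/row_subP => i.
case: (boolP (i \in P)) => iP; last by rewrite h0 // sub0mx.
apply: (eq_row_sub (enum_rank_in iP i)).
by rewrite rowK enum_rankK_in.
Qed.

Lemma sum_delta (k : nat) (x : 'I_k) : \sum_(v < k) ((x == v)%:R : F2) = 1.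
Proof.
rewrite (bigD1 x) //= eqxx big1 ?addr0 // => v /negbTE; by rewrite eq_sym => ->.
Qed.

Section Graph.
Variables (n m : nat) (a b : 'I_m -> 'I_n).
Hypothesis hab : forall i, a i != b i.

Definition Bg : 'M[F2]_(m, n) := locked (\matrix_(i, j) ((a i == j)%:R + (b i == j)%:R)).
Lemma BgE i j : Bg i j = (a i == j)%:R + (b i == j)%:R.
Proof. by rewrite /Bg -lock mxE. Qed.
Definition BP (P : {set 'I_m}) : 'M[F2]_(m, n) :=
  \matrix_(i, j) (if i \in P then Bg i j else 0).
Definition inc i v := (a i == v) || (b i == v).
Definition deg (P : {set 'I_m}) v := #|[set i in P | inc i v]|.
Definition NP (P : {set 'I_m}) := [set v | (0 < deg P v)%N].

Lemma rank_BP_le (P : {set 'I_m}) : (\rank (BP P) <= #|P|)%N.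
Proof.
apply: rank_rows_set => i iP; apply/rowP => j; by rewrite !mxE (negbTE iP).
Qed.

Lemma Bg_inc i v : Bg i v != 0 -> inc i v.
Proof.
rewrite BgE /inc; by case: (a i == v); case: (b i == v); rewrite ?addr0 ?eqxx.
Qed.

Lemma rank_BP_del (P : {set 'I_m}) i0 : (\rank (BP P) <= (\rank (BP (P :\ i0))).+1)%N.
Proof.
set R : 'M[F2]_(m, n) := \matrix_(i, j) (if (i == i0) && (i \in P) then Bg i j else 0).
have -> : BP P = (BP (P :\ i0) + R)%R.
  apply/matrixP => i j; rewrite !mxE !inE.
  by case: (i == i0); case: (i \in P); rewrite /= ?addr0 ?add0r.
apply: leq_trans (mxrank_add_le _ _) _; rewrite -(addn1 (\rank (BP (P :\ i0)))) leq_add2l.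
have -> : 1%N = #|[set i0]| by rewrite cards1.
apply: rank_rows_set => i; rewrite inE => ni; apply/rowP => j.
by rewrite !mxE (negbTE ni).
Qed.

Lemma Bg_rowsum i : \sum_v Bg i v = 0.
Proof.
under eq_bigr do rewrite BgE.
by rewrite big_split /= !sum_delta F2_add.
Qed.

Lemma rank_BP_N (P : {set 'I_m}) : (0 < #|P|)%N -> (\rank (BP P) <= (#|NP P|).-1)%N.
Proof.
case/card_gt0P => i0 i0P.
have w0N : a i0 \in NP P.
  rewrite inE; apply/card_gt0P; exists i0; by rewrite inE i0P /inc eqxx.
set w0 := a i0 in w0N *.
rewrite -mxrank_tr.
set A' : 'M[F2]_(n, m) := \matrix_(v, i) (if v == w0 then 0 else (BP P)^T v i).
have -> : (#|NP P|).-1 = #|NP P :\ w0| by rewrite (cardsD1 w0) w0N.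
apply: (@leq_trans (\rank A')); last first.
  apply: rank_rows_set => v; rewrite !inE negb_and negbK => hv.
  apply/rowP => i; rewrite !mxE.
  case: eqP => // /eqP vw; rewrite (negbTE vw) /= in hv.
  case: ifP => // iP.
  move: hv; rewrite -leqNgt leqn0 cards_eq0 => /eqP/setP/(_ i).
  rewrite !inE iP /inc /= => /negbT; rewrite negb_or => /andP[/negbTE h1 /negbTE h2].
  by rewrite BgE h1 h2 addr0.
apply: mxrankS; apply/row_subP => v.
case: (eqVneq v w0) => [->|vw]; last first.
  apply: (eq_row_sub v); apply/rowP => i; by rewrite !mxE (negbTE vw).
have -> : row w0 (BP P)^T = (\row_v ((v != w0)%:R : F2)) *m A'.
  apply/rowP => i.
  have hs : \sum_v (BP P)^T v i = 0.
    rewrite /BP; under eq_bigr do rewrite !mxE.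
    by case: (i \in P); rewrite ?Bg_rowsum // big1.
  rewrite (bigD1 w0) //= in hs.
  move/eqP: hs; rewrite addr_eq0 F2_opp => /eqP hs.
  rewrite [LHS]mxE hs [RHS]mxE big_mkcond /=; apply: eq_bigr => u _; rewrite !mxE.
  by case: eqP => [->|_]; rewrite ?mul0r ?mul1r.
apply: submxMl.
Qed.

Lemma inc_nat i v : (inc i v : nat) = ((a i == v) + (b i == v))%N.
Proof.
rewrite /inc; case: eqP => [<-|_]; case: eqP => [e|_] //.
by move: (hab i); rewrite e eqxx.
Qed.

Lemma sum_delta_nat (k : nat) (x : 'I_k) : (\sum_(v < k) (x == v : nat))%N = 1%N.
Proof.
rewrite (bigD1 x) //= eqxx big1 ?addn0 // => v /negbTE; by rewrite eq_sym => ->.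
Qed.

Lemma degE (P : {set 'I_m}) v : deg P v = (\sum_(i in P) (inc i v : nat))%N.
Proof.
rewrite /deg -sum1_card big_mkcond [RHS]big_mkcond; apply: eq_bigr => i _.
by rewrite inE; case: (i \in P); case: (inc i v).
Qed.

Lemma deg_sum (P : {set 'I_m}) : (\sum_v deg P v)%N = (2 * #|P|)%N.
Proof.
under eq_bigr do rewrite degE.
rewrite exchange_big /= -sum1_card big_distrr /=; apply: eq_bigr => i _.
under eq_bigr do rewrite inc_nat.
by rewrite big_split /= !sum_delta_nat.
Qed.

Lemma sum_pos_deg (P : {set 'I_m}) : (\sum_v (0 < deg P v : nat))%N = #|NP P|.
Proof.
rewrite -sum1_card [RHS]big_mkcond; apply: eq_bigr => v _.
by rewrite inE; case: (0 < deg P v)%N.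
Qed.

Lemma BP_row_out (P : {set 'I_m}) i : i \notin P -> row i (BP P) = 0.
Proof. by move=> iP; apply/rowP => j; rewrite !mxE (negbTE iP). Qed.

Lemma BP_row_in (P : {set 'I_m}) i : i \in P -> row i (BP P) = row i Bg.
Proof. by move=> iP; apply/rowP => j; rewrite !mxE iP. Qed.

Lemma leaf_exists (P : {set 'I_m}) (r : 'I_n) :
  (0 < #|P|)%N -> (#|P| <= \rank (BP P))%N ->
  exists2 w, w != r & deg P w = 1%N.
Proof.
move=> P0 Pr.
have hN := rank_BP_N P0.
suff /existsP[w /andP[wr /eqP d1]] : [exists w, (w != r) && (deg P w == 1%N)].
  by exists w.
apply: contraT => /existsPn hn.
have key : forall w, (2 * (0 < deg P w) <= deg P w + (w == r))%N.
  move=> w; case: (eqVneq w r) => [->|wr]; first by case: (deg P r) => [|[|d]].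
  have : deg P w != 1%N.
    by move: (hn w); rewrite wr.
  by case: (deg P w) => [|[|d]].
have : (\sum_w 2 * (0 < deg P w) <= \sum_w (deg P w + (w == r)))%N.
  by apply: leq_sum => w _; exact: key w.
rewrite -big_distrr /= sum_pos_deg big_split /= deg_sum.
rewrite (bigD1 r) //= eqxx big1 => [|w /negbTE -> //].
rewrite addn0 /= => h; move: hN Pr P0 h; case: #|NP P| => [|N] /=; lia.
Qed.

Lemma leaf_edge (P : {set 'I_m}) w : deg P w = 1%N ->
  exists i0, [/\ i0 \in P, inc i0 w & forall i, i \in P -> inc i w -> i = i0].
Proof.
rewrite /deg => /eqP/cards1P[i0 h]; exists i0.
have : i0 \in [set i in P | inc i w] by rewrite h set11.
rewrite inE => /andP[i0P i0w]; split => // i iP iw.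
have : i \in [set i in P | inc i w] by rewrite inE iP iw.
by rewrite h inE => /eqP.
Qed.

Lemma forest_orient (k : nat) : forall (P : {set 'I_m}) (r : 'I_n), #|P| = k ->
  (#|P| <= \rank (BP P))%N ->
  exists g : 'I_m -> 'I_n, [/\ forall i, i \in P -> inc i (g i),
     {in P &, injective g} & forall i, i \in P -> g i != r].
Proof.
elim: k => [|k IH] P r Pk Pr.
  exists a; split => [i|i j|i]; by move/eqP: Pk; rewrite cards_eq0 => /eqP ->; rewrite inE.
have P0 : (0 < #|P|)%N by rewrite Pk.
have [w wr /leaf_edge [i0 [i0P i0w i0u]]] := leaf_exists r P0 Pr.
have P'k : #|P :\ i0| = k by move: Pk; rewrite (cardsD1 i0) i0P add1n => [[]].
have P'r : (#|P :\ i0| <= \rank (BP (P :\ i0)))%N.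
  by have := rank_BP_del P i0; move: Pr; rewrite Pk P'k; lia.
have [g' [g'1 g'2 g'3]] := IH _ r P'k P'r.
exists (fun i => if i == i0 then w else g' i); split.
- move=> i iP; case: eqP => [->//|/eqP ii0].
  by apply: g'1; rewrite !inE ii0.
- move=> i j iP jP /=.
  have hP x : x \in P -> x != i0 -> x \in P :\ i0 by move=> xP xi; rewrite !inE xi.
  case: eqP => [->|/eqP ii0]; case: eqP => [->|/eqP ji0] // e.
  + have := g'1 j (hP _ jP ji0); rewrite -e => /(i0u _ jP) je.
    by rewrite je eqxx in ji0.
  + have := g'1 i (hP _ iP ii0); rewrite e => /(i0u _ iP) ie.
    by rewrite ie eqxx in ii0.
  + exact: g'2 (hP _ iP ii0) (hP _ jP ji0) e.
- move=> i iP; case: (eqVneq i i0) => [_|ii0]; first exact: wr.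
  by apply: g'3; rewrite !inE ii0.
Qed.

Lemma F2_nat_even (d : nat) : ~~ odd d -> (d%:R : F2) = 0.
Proof.
move=> ev; rewrite -[d]odd_double_half (negbTE ev) add0n -muln2 natrM.
suff -> : (2%:R : F2) = 0 by rewrite mulr0.
by rewrite -[2%N]/(1 + 1)%N natrD F2_add.
Qed.

Lemma sum_Bg_col (P : {set 'I_m}) v : \sum_(i in P) Bg i v = (deg P v)%:R.
Proof.
rewrite degE natr_sum; apply: eq_bigr => i _.
by rewrite BgE inc_nat natrD.
Qed.

Lemma NP_ge2 (P : {set 'I_m}) : (0 < #|P|)%N -> (2 <= #|NP P|)%N.
Proof.
case/card_gt0P => i0 i0P.
have hin x : inc i0 x -> x \in NP P.
  by move=> h; rewrite inE; apply/card_gt0P; exists i0; rewrite inE i0P h.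
have <- : #|[set a i0; b i0]| = 2%N by rewrite cards2 (hab i0).
apply: subset_leq_card.
apply/subsetP => x; rewrite in_set2 => /orP[] /eqP ->; apply: hin; by rewrite /inc eqxx ?orbT.
Qed.

Lemma orient_le1 (k : nat) : forall (P : {set 'I_m}), #|P| = k ->
  (#|P| <= (\rank (BP P)).+1)%N ->
  exists g : 'I_m -> 'I_n, (forall i, i \in P -> inc i (g i)) /\ {in P &, injective g}.
Proof.
elim: k => [|k IH] P Pk Pr.
  exists a; split => [i|i j]; by move/eqP: Pk; rewrite cards_eq0 => /eqP ->; rewrite inE.
have P0 : (0 < #|P|)%N by rewrite Pk.
case: (boolP [exists w, deg P w == 1%N]) => [/existsP[w /eqP /leaf_edge [i0 [i0P i0w i0u]]] | /existsPn hn].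
  have P'k : #|P :\ i0| = k by move: Pk; rewrite (cardsD1 i0) i0P add1n => [[]].
  have P'r : (#|P :\ i0| <= (\rank (BP (P :\ i0))).+1)%N.
    by have := rank_BP_del P i0; move: Pr; rewrite Pk P'k; lia.
  have [g' [g'1 g'2]] := IH _ P'k P'r.
  exists (fun i => if i == i0 then w else g' i); split.
  - move=> i iP; case: (eqVneq i i0) => [->//|ii0].
    by apply: g'1; rewrite !inE ii0.
  - move=> i j iP jP /=.
    have hP x : x \in P -> x != i0 -> x \in P :\ i0 by move=> xP xi; rewrite !inE xi.
    case: (eqVneq i i0) => [->|ii0]; case: (eqVneq j i0) => [->|ji0] // e.
    + have := g'1 j (hP _ jP ji0); rewrite -e => /(i0u _ jP) je.
      by rewrite je eqxx in ji0.
    + have := g'1 i (hP _ iP ii0); rewrite e => /(i0u _ iP) ie.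
      by rewrite ie eqxx in ii0.
    + exact: g'2 (hP _ iP ii0) (hP _ jP ji0) e.
(* no leaf: all degrees are 0 or 2 *)
have hN := rank_BP_N P0.
have key : forall w, (2 * (0 < deg P w) + (2 < deg P w) <= deg P w)%N.
  move=> w; have := hn w; by case: (deg P w) => [|[|[|d]]].
have hs : (\sum_w (2 * (0 < deg P w) + (2 < deg P w)) <= \sum_w deg P w)%N.
  by apply: leq_sum => w _; exact: key w.
move: hs; rewrite big_split /= -big_distrr /= sum_pos_deg deg_sum => hs.
have T0 : (\sum_w (2 < deg P w : nat) == 0)%N.
  apply/eqP; have := NP_ge2 P0; move: hs hN Pr P0; case: #|NP P| => [|N] /=; lia.
rewrite sum_nat_eq0 in T0.
have ev : forall w, (deg P w)%:R = (0 : F2).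
  move=> w; apply: F2_nat_even; move/forallP: T0 => /(_ w).
  by have := hn w; case: (deg P w) => [|[|[|d]]].
case/card_gt0P: P0 => i0 i0P.
have P'k : #|P :\ i0| = k by move: Pk; rewrite (cardsD1 i0) i0P add1n => [[]].
have sub : (BP P <= BP (P :\ i0))%MS.
  apply/row_subP => i; case: (boolP (i \in P)) => iP; last by rewrite BP_row_out // sub0mx.
  case: (eqVneq i i0) => [->|ii0]; last first.
    by apply: (eq_row_sub i); rewrite !BP_row_in // !inE ii0.
  rewrite BP_row_in //.
  have -> : row i0 Bg = (\row_j ((j \in P :\ i0)%:R : F2)) *m BP (P :\ i0).
    apply/rowP => v; rewrite !mxE.
    have := ev v; rewrite -sum_Bg_col (bigD1 i0) //= => /eqP; rewrite addr_eq0 F2_opp => /eqP ->.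
    rewrite [LHS]big_mkcond; apply: eq_bigr => j _; rewrite !mxE !inE.
    by case: (j != i0); case: (j \in P); rewrite /= ?mul1r ?mul0r.
  exact: submxMl.
have P'r : (#|P :\ i0| <= \rank (BP (P :\ i0)))%N.
  have := mxrankS sub; have := rank_BP_N (P := P); move: Pr; rewrite Pk P'k.
  move: hs; rewrite Pk => hs h1 h2 h3; have h4 := h2 isT.
  move: hs h1 h3 h4; case: #|NP P| => [|N] /=; lia.
have [g' [g'1 g'2 g'3]] := forest_orient (a i0) P'k P'r.
exists (fun i => if i == i0 then a i0 else g' i); split.
- move=> i iP; case: (eqVneq i i0) => [->|ii0]; first by rewrite /inc eqxx.
  by apply: g'1; rewrite !inE ii0.
- move=> i j iP jP /=.
  have hP x : x \in P -> x != i0 -> x \in P :\ i0 by move=> xP xi; rewrite !inE xi.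
  case: (eqVneq i i0) => [->|ii0]; case: (eqVneq j i0) => [->|ji0] // e.
  + by have := g'3 j (hP _ jP ji0); rewrite e eqxx.
  + by have := g'3 i (hP _ iP ii0); rewrite e eqxx.
  + exact: g'2 (hP _ iP ii0) (hP _ jP ji0) e.
Qed.

End Graph.

Lemma colorable_ge2 (W : finType) (e : rel W) (k : nat) u v :
  irr_part e u v -> colorable k (irr_part e) -> (2 <= k)%N.
Proof.
move=> euv /existsP[c /forallP /(_ u) /forallP /(_ v) /implyP /(_ euv)].
case: k c => [|[|k]] c //; first by case: (c u).
by rewrite (ord1 (c u)) (ord1 (c v)).
Qed.

Lemma chi_ge2 (W : finType) (e : rel W) u v : irr_part e u v -> (2 <= chi e)%N.
Proof. by move=> euv; rewrite /chi; case: ex_minnP => k ck _; exact: colorable_ge2 euv ck. Qed.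

Lemma chi_le (W : finType) (e : rel W) k : colorable k (irr_part e) -> (chi e <= k)%N.
Proof. by move=> ck; rewrite /chi; case: ex_minnP => k' _ /(_ k ck). Qed.

Lemma F2_cases (x y : F2) : x != y -> (x == 0) != (y == 0).
Proof.
rewrite /F2 in x y *.
by case: x => [[|[|?]] ?]; case: y => [[|[|?]] ?].
Qed.

Section Map.
Variables (V D : finType) (tail : D -> V) (alpha sigma : {perm D}).
Hypothesis hA : forall d, alpha (alpha d) = d.
Hypothesis hA1 : forall d, alpha d != d.
Hypothesis hS : forall d d', (tail d == tail d') = fconnect sigma d d'.
Hypothesis hsurj : forall v, exists d, tail d = v.
Hypothesis hloop : forall d, tail (alpha d) != tail d.
Hypothesis hsimple : forall d d', tail d = tail d' -> tail (alpha d) = tail (alpha d') -> d = d'.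
Hypothesis hconn : forall u v, connect (adj tail alpha) u v.
Hypothesis heuler : (#|V| + nfaces alpha sigma = nedges D + 2)%N.
Hypothesis hface : forall d, fingraph.order (phi alpha sigma) d = 3%N.

Local Notation ph := (phi alpha sigma).

Lemma ph_inj : injective ph.
Proof. by move=> x y; rewrite /phi => /perm_inj /perm_inj. Qed.

Lemma tail_sigma x : tail (sigma x) = tail x.
Proof. by apply/eqP; rewrite eq_sym hS fconnect1. Qed.

Lemma tail_alpha_ph d : tail (alpha d) = tail (ph d).
Proof. by rewrite /phi tail_sigma. Qed.

Lemma sigma_ph d : sigma d = ph (alpha d).
Proof. by rewrite /phi hA. Qed.

Lemma fconnect_tail d d' : fconnect sigma d d' -> tail d = tail d'.
Proof. by rewrite -hS => /eqP. Qed.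

Lemma dart_const (T : eqType) (h : D -> T) :
  (forall d, h (ph d) = h d) -> (forall d, h (alpha d) = h d) ->
  forall d d', h d = h d'.
Proof.
move=> hph hal.
have hsig : forall d, h (sigma d) = h d by move=> d; rewrite sigma_ph hph hal.
have htail : forall d d', tail d = tail d' -> h d = h d'.
  move=> d d' /eqP; rewrite hS => /connectP[p pp ->] {d'}.
  elim: p d pp => //= y p IH d /andP[/eqP <- pp]; by rewrite -IH // hsig.
move=> d d'.
have gen : forall p u e, tail e = u -> path (adj tail alpha) u p ->
    tail d' = last u p -> h e = h d'.
  elim=> [|y p IH] u e /= e_u.
    by move=> _ ue; apply: htail; rewrite ue.
  case/andP=> /existsP[e' /andP[/eqP te' /eqP tae']] pp tl.
  rewrite (htail e e'); last by rewrite e_u te'.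
  by rewrite -hal; apply: (IH y) => //; rewrite tae'.
have /connectP[p pp e] := hconn (tail d) (tail d').
exact: gen pp e.
Qed.
Definition Er : {set D} := [set d | (enum_rank d < enum_rank (alpha d))%N].

Lemma Er_alpha d : (alpha d \in Er) = (d \notin Er).
Proof.
have ne : (enum_rank d : nat) != enum_rank (alpha d).
  by apply/negP => /eqP /val_inj /enum_rank_inj e; move: (hA1 d); rewrite -e eqxx.
rewrite !inE hA; move: ne; by case: ltngtP.
Qed.

Lemma split_Er (R : nmodType) (g : D -> R) :
  \sum_(d in Er) (g d + g (alpha d)) = \sum_d g d.
Proof.
rewrite big_split /= [RHS](bigID (fun d => d \in Er)) /=; congr (_ + _).
rewrite (reindex_inj (@perm_inj _ alpha)) /=.
by apply: eq_big => [d|d _]; rewrite ?Er_alpha ?hA.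
Qed.

Lemma card_D_Er : #|D| = (2 * #|Er|)%N.
Proof.
have := split_Er (fun _ => 1%N); rewrite sum1_card => <-.
transitivity (\sum_(d in Er) 2)%N; first by [].
by rewrite sum_nat_const mulnC.
Qed.

Definition Fr : {set D} := [set d | froot ph d == d].
Local Notation nF := #|Fr|.
Definition fc (j : 'I_nF) : D := enum_val j.

Lemma fc_root j : froot ph (fc j) = fc j.
Proof. by have := enum_valP j; rewrite inE => /eqP. Qed.

Lemma ph_sym : connect_sym (frel ph).
Proof. exact: fconnect_sym ph_inj. Qed.

Lemma fc_conn j j' : fconnect ph (fc j) (fc j') = (j == j').
Proof.
apply/idP/eqP => [|->]; last exact: connect0.
move/(fingraph.rootP ph_sym); rewrite !fc_root => /enum_val_inj.
done.
Qed.

Lemma froot_Fr d : froot ph d \in Fr.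
Proof. by rewrite inE (fingraph.root_root ph_sym). Qed.

Lemma face_unique d : (\sum_j (fconnect ph (fc j) d : nat))%N = 1%N.
Proof.
set j0 := enum_rank_in (froot_Fr d) (froot ph d).
have fj0 : fc j0 = froot ph d by rewrite /fc enum_rankK_in // froot_Fr.
rewrite (bigD1 j0) //= fj0 ph_sym connect_root big1 ?addn0 // => j jj0.
apply/eqP; rewrite eqb0; apply/negP => cj.
have : fconnect ph (fc j) (fc j0) by rewrite fj0 (connect_trans cj) // connect_root.
by rewrite fc_conn (negbTE jj0).
Qed.

Lemma nfacesE : nfaces alpha sigma = nF.
Proof. by apply: eq_card => x; rewrite !inE andbT. Qed.

Lemma card_D_F : #|D| = (3 * nF)%N.
Proof.
transitivity (\sum_(d : D) 1)%N; first by rewrite sum1_card.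
transitivity (\sum_d \sum_j (fconnect ph (fc j) d : nat))%N.
  by apply: eq_bigr => d _; rewrite face_unique.
rewrite exchange_big /=; transitivity (\sum_(j < nF) 3)%N; last first.
  by rewrite big_const_ord iter_addn_0 mulnC.
apply: eq_bigr => j _; rewrite -(hface (fc j)) /fingraph.order -sum1_card.
rewrite [RHS]big_mkcond; apply: eq_bigr => d _; rewrite -topredE /=; by case: (fconnect ph (fc j) d).
Qed.

Lemma euler_nat : (#|V| + nF = #|Er| + 2)%N.
Proof. by rewrite -nfacesE heuler /nedges card_D_Er mulKn. Qed.

Local Notation nE := #|Er|.
Definition ed (i : 'I_nE) : D := enum_val i.
Definition ea (i : 'I_nE) : 'I_#|V| := enum_rank (tail (ed i)).
Definition eb (i : 'I_nE) : 'I_#|V| := enum_rank (tail (alpha (ed i))).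

Lemma hab i : ea i != eb i.
Proof. by apply/negP => /eqP /enum_rank_inj e; move: (hloop (ed i)); rewrite e eqxx. Qed.

Lemma ed_in i : ed i \in Er.
Proof. exact: enum_valP. Qed.

Lemma sum_ed (R : nmodType) (G : D -> R) : \sum_(i < nE) G (ed i) = \sum_(d in Er) G d.
Proof. by rewrite (big_enum_val G). Qed.

Definition Bm := Bg ea eb.
Definition Cm : 'M[F2]_(nF, nE) :=
  \matrix_(j, i) ((fconnect ph (fc j) (ed i))%:R + (fconnect ph (fc j) (alpha (ed i)))%:R).

Definition xd (x : 'rV[F2]_nF) d := \sum_j x 0 j * (fconnect ph (fc j) d)%:R.

Lemma xCm x i : (x *m Cm) 0 i = xd x (ed i) + xd x (alpha (ed i)).
Proof.
rewrite mxE /xd -big_split /=; apply: eq_bigr => j _; by rewrite mxE mulrDr.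
Qed.

Lemma fconn_ph x d : fconnect ph x (ph d) = fconnect ph x d.
Proof. by rewrite -(same_fconnect1_r ph_inj). Qed.

Lemma xd_ph x d : xd x (ph d) = xd x d.
Proof. by apply: eq_bigr => j _; rewrite fconn_ph. Qed.

Lemma xd_fc x j : xd x (fc j) = x 0 j.
Proof.
rewrite /xd (bigD1 j) //= fc_conn eqxx mulr1 big1 ?addr0 // => j' /negbTE jj.
by rewrite fc_conn jj mulr0.
Qed.

Lemma CmBm : Cm *m Bm = 0.
Proof.
apply/matrixP => j v; rewrite !mxE.
set f := fc j.
set s := fun d => ((enum_rank (tail d) == v)%:R + (enum_rank (tail (alpha d)) == v)%:R : F2).
set g := fun d => ((fconnect ph f d)%:R * s d : F2).
transitivity (\sum_(i < nE) (g (ed i) + g (alpha (ed i)))).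
  apply: eq_bigr => i _; rewrite /g /s /Bm BgE !mxE hA /ea /eb [X in _ = _ + _ * X]addrC.
  by rewrite -mulrDl.
rewrite (sum_ed (fun d => g d + g (alpha d))) split_Er /g /s.
under eq_bigr do rewrite mulrDr.
rewrite big_split /=.
suff -> : \sum_d ((fconnect ph f d)%:R * (enum_rank (tail (alpha d)) == v)%:R : F2) =
          \sum_d ((fconnect ph f d)%:R * (enum_rank (tail d) == v)%:R) by rewrite F2_add.
rewrite [RHS](reindex_inj ph_inj) /=; apply: eq_bigr => d _.
by rewrite fconn_ph tail_alpha_ph.
Qed.

Lemma vec_const (k : nat) (x : 'rV[F2]_k) :
  (forall j j', x 0 j = x 0 j') -> (x <= (const_mx 1 : 'rV[F2]_k))%MS.
Proof.
case: k x => [|k] x hx.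
  suff -> : x = 0 by rewrite sub0mx.
  by apply/rowP => -[].
have -> : x = x 0 0 *: const_mx 1.
  by apply/rowP => j; rewrite !mxE mulr1 (hx j 0).
exact: scalemx_sub.
Qed.

Lemma rank_of_ker (m n : nat) (A : 'M[F2]_(m, n)) :
  (kermx A <= (const_mx 1 : 'rV[F2]_m))%MS -> (m <= (\rank A).+1)%N.
Proof.
move/mxrankS; rewrite mxrank_ker => h.
have := leq_trans h (rank_leq_row _); lia.
Qed.

Lemma alpha_sym_Er (T : eqType) (h : D -> T) :
  (forall i, h (alpha (ed i)) = h (ed i)) -> forall d, h (alpha d) = h d.
Proof.
move=> hi d; case: (boolP (d \in Er)) => dE.
  by have := hi (enum_rank_in dE d); rewrite /ed enum_rankK_in.
rewrite -Er_alpha in dE.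
by have := hi (enum_rank_in dE (alpha d)); rewrite /ed enum_rankK_in // hA => ->.
Qed.

Lemma rank_Cm : (nF <= (\rank Cm).+1)%N.
Proof.
apply: rank_of_ker; apply/row_subP => k.
set x := row k (kermx Cm).
have x0 : x *m Cm = 0 by apply/sub_kermxP; exact: row_sub.
have hal : forall d, xd x (alpha d) = xd x d.
  apply: alpha_sym_Er => i; apply/eqP; rewrite -subr_eq0 F2_opp addrC -xCm x0.
  by rewrite mxE.
have hc := dart_const (xd_ph x) hal.
by apply: vec_const => j j'; rewrite -!xd_fc.
Qed.

Lemma rank_Bm : (#|V| <= (\rank Bm).+1)%N.
Proof.
rewrite -mxrank_tr; apply: rank_of_ker; apply/row_subP => k.
set c := row k (kermx Bm^T).
have c0 : c *m Bm^T = 0 by apply/sub_kermxP; exact: row_sub.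
clearbody c.
pose h d := c 0 (enum_rank (tail d)).
have hi : forall i, (c *m Bm^T) 0 i = c 0 (ea i) + c 0 (eb i).
  move=> i; rewrite mxE.
  under eq_bigr do rewrite mxE /Bm BgE mulrDr.
  rewrite big_split /=; congr (_ + _).
    rewrite (bigD1 (ea i)) //= eqxx mulr1 big1 ?addr0 // => v /negbTE.
    by rewrite eq_sym => ->; rewrite mulr0.
  rewrite (bigD1 (eb i)) //= eqxx mulr1 big1 ?addr0 // => v /negbTE.
  by rewrite eq_sym => ->; rewrite mulr0.
have hal : forall d, h (alpha d) = h d.
  apply: alpha_sym_Er => i; apply/eqP; rewrite /h -/(ea i) -/(eb i).
  by rewrite -subr_eq0 F2_opp addrC -hi c0 mxE.
have hph : forall d, h (ph d) = h d by move=> d; rewrite /h -tail_alpha_ph -/(h _) hal.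
have hc := dart_const hph hal.
apply: vec_const => v v'.
have [d td] := hsurj (enum_val v); have [d' td'] := hsurj (enum_val v').
by rewrite -(enum_valK v) -(enum_valK v') -td -td' -/(h d) -/(h d') (hc d d').
Qed.

Lemma cycle_space : (kermx Bm <= Cm)%MS.
Proof.
have sub : (Cm <= kermx Bm)%MS by apply/sub_kermxP; exact: CmBm.
have [le eqi] := mxrank_leqif_sup sub.
rewrite -eqi eqn_leq le /= mxrank_ker.
have := rank_Bm; have := rank_Cm; have := euler_nat; have := rank_leq_col Bm.
move: (\rank Bm) (\rank Cm) => rb rc; lia.
Qed.

Variable S : {set D}.
Hypothesis hSa : forall d, (alpha d \in S) = (d \in S).
Hypothesis hS2 : forall d, #|[set d' in S | fconnect ph d d']| = 2%N.

Lemma F2_two : (2%:R : F2) = 0.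
Proof. by rewrite -[2%N]/(1 + 1)%N natrD F2_add. Qed.

Lemma sumS_xd (x : 'rV[F2]_nF) : \sum_d (d \in S)%:R * xd x d = 0.
Proof.
rewrite /xd; under eq_bigr do rewrite big_distrr /=.
rewrite exchange_big /= big1 // => j _.
transitivity (x 0 j * (#|[set d' in S | fconnect ph (fc j) d']|)%:R); last first.
  by rewrite hS2 F2_two mulr0.
rewrite -[#|[set d' in S | fconnect ph (fc j) d']|]sum1_card natr_sum big_distrr /= [RHS]big_mkcond /=; apply: eq_bigr => d _.
rewrite inE; case: (d \in S); case: (fconnect ph (fc j) d);
  by rewrite /= ?mulr0 ?mulr1 ?mul0r ?mul1r.
Qed.

Lemma coloring : exists c : V -> F2, forall d, d \in S -> c (tail d) != c (tail (alpha d)).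
Proof.
set b : 'rV[F2]_nE := \row_i ((ed i \in S)%:R : F2).
set BS : 'M[F2]_(#|V|, nE) := \matrix_(v, i) ((ed i \in S)%:R * Bm i v).
suff /submxP[c bc] : (b <= BS)%MS.
  have key : forall i, ed i \in S -> c 0 (ea i) != c 0 (eb i).
    move=> i iS; have := congr1 (fun M : 'rV[F2]_nE => M 0 i) bc; rewrite !mxE iS.
    under eq_bigr do rewrite mxE /Bm BgE iS mul1r mulrDr.
    rewrite big_split /= (bigD1 (ea i)) //= eqxx mulr1 big1 ?addr0; last first.
      by move=> v /negbTE; rewrite eq_sym => ->; rewrite mulr0.
    rewrite (bigD1 (eb i)) //= eqxx mulr1 big1 ?addr0; last first.
      by move=> v /negbTE; rewrite eq_sym => ->; rewrite mulr0.
    by move=> e; apply/negP => /eqP ce; move: e; rewrite ce F2_add => /eqP; rewrite oner_eq0.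
  exists (fun v => c 0 (enum_rank v)) => d dS.
  case: (boolP (d \in Er)) => dE.
    by have := key (enum_rank_in dE d); rewrite /ea /eb /ed enum_rankK_in //; apply.
  rewrite -Er_alpha in dE.
  have := key (enum_rank_in dE (alpha d)); rewrite /ea /eb /ed enum_rankK_in // hA hSa eq_sym.
  by apply.
rewrite submxE; apply/eqP/rowP => k; rewrite !mxE.
set K := cokermx BS.
have BSK : BS *m K = 0 by exact: mulmx_coker.
clearbody K.
set y : 'rV[F2]_nE := \row_i ((ed i \in S)%:R * K i k).
have yB : (y <= kermx Bm)%MS.
  apply/sub_kermxP/rowP => v.
  transitivity ((BS *m K) v k); last by rewrite BSK !mxE.
  rewrite !mxE; apply: eq_bigr => i _; rewrite !mxE; by rewrite mulrAC.
have /submxP[x yx] := submx_trans yB cycle_space.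
transitivity (\sum_i y 0 i).
  by apply: eq_bigr => i _; rewrite !mxE.
transitivity (\sum_i ((ed i \in S)%:R * (x *m Cm) 0 i)).
  apply: eq_bigr => i _; rewrite -yx !mxE.
  by case: (ed i \in S); rewrite ?mul0r ?mul1r.
under eq_bigr do rewrite xCm mulrDr.
rewrite (sum_ed (fun d => (d \in S)%:R * xd x d + (d \in S)%:R * xd x (alpha d))).
rewrite -[RHS](sumS_xd x) -split_Er; apply: eq_bigr => d _; by rewrite hSa.
Qed.

Local Notation R := (dual_sub_rel alpha sigma S).
Hypothesis hncomp : (dual_ncomp alpha sigma S <= 2)%N.
Variable d0 : D.

Lemma R_sym : connect_sym R.
Proof.
apply: sym_connect_sym => d d'; rewrite /dual_sub_rel (fconnect_sym ph_inj).
congr (_ || _); apply/andP/andP => -[h1 /eqP h2]; split.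
- by rewrite h2 hSa.
- by rewrite h2 hA.
- by rewrite h2 hSa.
- by rewrite h2 hA.
Qed.

Lemma roots_two r r' : fingraph.root R r = r -> fingraph.root R r' = r' ->
  r != fingraph.root R d0 -> r' != fingraph.root R d0 -> r = r'.
Proof.
move=> rr rr' n0 n0'; apply/eqP/negPn/negP => nr.
have : (3 <= dual_ncomp alpha sigma S)%N.
  rewrite /dual_ncomp /n_comp_mem.
  have <- : #|fingraph.root R d0 |: [set r; r']| = 3%N.
    rewrite cardsU1 cards2 nr !inE negb_or eq_sym n0 eq_sym n0'.
    done.
  apply: subset_leq_card; apply/subsetP => z.
  rewrite !inE andbT => /or3P[] /eqP ->; rewrite /roots ?rr ?rr' ?eqxx //.
  by rewrite (fingraph.root_root R_sym).
by move: hncomp; lia.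
Qed.

Definition X : {set 'I_nE} := [set i | ed i \notin S].

Lemma xd_S (x : 'rV[F2]_nF) :
  (forall i, ed i \in S -> (x *m Cm) 0 i = 0) ->
  forall d d', connect R d d' -> xd x d = xd x d'.
Proof.
move=> h.
have hal : forall d, d \in S -> xd x (alpha d) = xd x d.
  move=> d dS.
  have gen : forall i, ed i \in S -> xd x (alpha (ed i)) = xd x (ed i).
    move=> i iS; apply/eqP; rewrite -subr_eq0 F2_opp addrC -xCm h //.
  case: (boolP (d \in Er)) => dE.
    by have := gen (enum_rank_in dE d); rewrite /ed enum_rankK_in //; apply.
  rewrite -Er_alpha in dE.
  have := gen (enum_rank_in dE (alpha d)); rewrite /ed enum_rankK_in // hA hSa => -> //.
have hph : forall d d', fconnect ph d d' -> xd x d = xd x d'.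
  move=> d d' /connectP[p pp ->]; elim: p d pp => //= y p IH d /andP[/eqP <- pp].
  by rewrite -IH // xd_ph.
move=> d d' /connectP[p pp ->]; elim: p d pp => //= y p IH d /andP[hr pp].
rewrite -IH //; move: hr; rewrite /dual_sub_rel => /orP[/hph //|/andP[dS /eqP ->]].
by rewrite hal.
Qed.

Lemma oneCm : (const_mx 1 : 'rV[F2]_nF) *m Cm = 0.
Proof.
have h1 : forall d, xd (const_mx 1) d = 1.
  move=> d; rewrite /xd; under eq_bigr do rewrite mxE mul1r.
  by rewrite -natr_sum face_unique.
by apply/rowP => i; rewrite xCm !h1 F2_add mxE.
Qed.

Definition chiv : 'rV[F2]_nF := \row_j ((fingraph.root R (fc j) == fingraph.root R d0)%:R).

Definition UX : 'M[F2]_(#|~: X|, nE) := \matrix_(k < #|~: X|) delta_mx 0 (enum_val k).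

Lemma ker_X_sub : (kermx (BP ea eb X) <= UX + chiv *m Cm)%MS.
Proof.
apply/row_subP => k.
set y := row k (kermx (BP ea eb X)).
have y0 : y *m BP ea eb X = 0 by apply/sub_kermxP; exact: row_sub.
clearbody y.
set yU : 'rV[F2]_nE := \row_i ((i \notin X)%:R * y 0 i).
set yX : 'rV[F2]_nE := \row_i ((i \in X)%:R * y 0 i).
have -> : y = (yU + yX)%R.
  by apply/rowP => i; rewrite !mxE; case: (i \in X); rewrite /= ?mul1r ?mul0r ?addr0 ?add0r.
apply: addmx_sub_adds.
  have -> : yU = \sum_(i in ~: X) y 0 i *: delta_mx 0 i.
    apply/rowP => i; rewrite !mxE summxE.
    under eq_bigr do rewrite !mxE.
    case: (boolP (i \in ~: X)) => iX.
      rewrite (bigD1 i) //= big1 ?addr0; last first.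
        by move=> j /andP[_ /negbTE]; rewrite eq_sym => ->; rewrite mulr0.
      by rewrite eqxx mulr1 -in_setC iX mul1r.
    rewrite big1; last first.
      move=> j jX; rewrite eqxx /=; case: eqP => [e|_]; [by move: iX; rewrite e jX | by rewrite mulr0].
    by rewrite -in_setC (negbTE iX) mul0r.
  apply: summx_sub => i iX; apply: scalemx_sub.
  apply: (eq_row_sub (enum_rank_in iX i)); by rewrite rowK enum_rankK_in.
have yXk : (yX <= kermx Bm)%MS.
  apply/sub_kermxP/rowP => v.
  transitivity ((y *m BP ea eb X) 0 v); last by rewrite y0 !mxE.
  rewrite !mxE; apply: eq_bigr => i _; rewrite !mxE /Bm.
  by case: (i \in X); rewrite ?mul1r ?mul0r ?mulr0.
have /submxP[x yx] := submx_trans yXk cycle_space.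
have hx : forall i, ed i \in S -> (x *m Cm) 0 i = 0.
  by move=> i iS; rewrite -yx !mxE inE iS mul0r.
have xc := xd_S hx.
have xroot : forall j, x 0 j = xd x (fingraph.root R (fc j)).
  by move=> j; rewrite -xd_fc; apply: xc; exact: fingraph.connect_root.
set r0 := fingraph.root R d0.
pose s := if [pick j | fingraph.root R (fc j) != r0] is Some j1 then x 0 j1 else xd x r0.
pose t := xd x r0 - s.
have xE : x = s *: const_mx 1 + t *: chiv.
  apply/rowP => j; rewrite !mxE mulr1.
  case: eqP => [e|/eqP ne].
    by rewrite mulr1 /t addrC subrK xroot e.
  rewrite mulr0 addr0 /s; case: pickP => [j1 /= n1|/(_ j)]; last by rewrite ne.
  rewrite !xroot; congr (xd x _).
  apply: roots_two => //; exact: (fingraph.root_root R_sym).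
rewrite yx xE mulmxDl -!scalemxAl oneCm scaler0 add0r.
exact: scalemx_sub.
Qed.

Lemma X_rank : (#|X| <= (\rank (BP ea eb X)).+1)%N.
Proof.
have h := mxrankS ker_X_sub.
rewrite mxrank_ker in h.
have h3 : (\rank (UX + chiv *m Cm)%MS <= \rank UX + \rank (chiv *m Cm))%N.
  by case: (mxrank_adds_leqif UX (chiv *m Cm)).
have h4 := rank_leq_row UX.
have h5 := rank_leq_row (chiv *m Cm).
have h6 := cardsC X; rewrite card_ord in h6.
have h7 := rank_leq_row (BP ea eb X).
move: h h3 h4 h5 h6 h7.
move: (\rank (BP ea eb X)) (\rank (UX + chiv *m Cm)%MS) (\rank UX) (\rank (chiv *m Cm)) => r1 r2 r3 r4.
lia.
Qed.

Definition other (i : 'I_nE) (v : 'I_#|V|) : V :=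
  if ea i == v then tail (alpha (ed i)) else tail (ed i).

Lemma selection : exists f : {ffun V -> option V},
  one_selection (adj tail alpha) f /\
  forall d, d \notin S -> (f (tail d) == Some (tail (alpha d))) || (f (tail (alpha d)) == Some (tail d)).
Proof.
have [g [g1 g2]] := orient_le1 hab (erefl #|X|) X_rank.
pose f := [ffun v => if [pick i in X | g i == enum_rank v] is Some i
                     then Some (other i (enum_rank v)) else None].
exists f; split.
  apply/forallP => v; rewrite ffunE; case: pickP => [i /andP[iX /eqP gi]|_] //=.
  have := g1 i iX; rewrite /inc gi /other.
  case: (eqVneq (ea i) (enum_rank v)) => [e|ne] /=.
    move=> _; rewrite /adj; apply/existsP; exists (ed i); move/enum_rank_inj: e => <-; by rewrite !eqxx.
  move=> /eqP/enum_rank_inj e; rewrite /adj; apply/existsP; exists (alpha (ed i)).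
  by rewrite hA -e !eqxx.
have cover : forall e, e \in Er -> e \notin S ->
    (f (tail e) == Some (tail (alpha e))) || (f (tail (alpha e)) == Some (tail e)).
  move=> e eE eS; set i := enum_rank_in eE e.
  have edi : ed i = e by rewrite /ed enum_rankK_in.
  have iX : i \in X by rewrite inE edi.
  have fv : f (enum_val (g i)) = Some (other i (g i)).
    rewrite ffunE enum_valK; case: pickP => [j /andP[jX /eqP gj]|/(_ i)]; last by rewrite iX eqxx.
    by rewrite (g2 _ _ jX iX gj).
  have := g1 i iX; rewrite /inc /other.
  case: (eqVneq (ea i) (g i)) => [ea_g|ne] /=.
    move=> _; rewrite -ea_g /ea enum_rankK edi in fv; by rewrite fv /other /ea edi !eqxx.
  move=> /eqP eb_g; rewrite -eb_g /eb enum_rankK edi in fv.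
  have ebe : enum_rank (tail (alpha e)) = eb i by rewrite /eb edi.
  by rewrite fv ebe /other (negbTE (hab i)) edi eqxx orbT.
move=> d dS; case: (boolP (d \in Er)) => dE; first exact: cover.
rewrite -Er_alpha in dE; rewrite -hSa in dS.
by have := cover _ dE dS; rewrite hA orbC.
Qed.

Lemma edge_survives (f : {ffun V -> option V}) : (4 <= #|V|)%N ->
  exists u v, del_sel (adj tail alpha) f u v.
Proof.
move=> h4.
set B1 := [set d | f (tail d) == Some (tail (alpha d))].
set B2 := [set d | f (tail (alpha d)) == Some (tail d)].
have c1 : (#|B1| <= #|V|)%N.
  apply: (@leq_card_in _ _ tail) => d d'; rewrite !inE => /eqP h1 /eqP h2 e.
  apply: hsimple => //; move: h1 h2; rewrite e => -> [] //.
have c2 : (#|B2| <= #|V|)%N.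
  apply: (@leq_card_in _ _ (fun d => tail (alpha d))) => d d'; rewrite !inE => /eqP h1 /eqP h2 e.
  apply: hsimple => //; move: h1 h2; rewrite /= e => -> [] //.
have c3 : (#|B1 :|: B2| <= #|B1| + #|B2|)%N by case: (leq_card_setU B1 B2).
have cD := card_D_Er; have cF := card_D_F; have eu := euler_nat.
case: (pickP (fun d => d \notin B1 :|: B2)) => [d /= dn|none]; last first.
  have : (#|D| <= #|B1 :|: B2|)%N.
    apply: subset_leq_card; apply/subsetP => x _; by have := none x; move/negbFE.
  move: c1 c2 c3 cD cF eu h4 => ? ? ? ? ? ? ? ?; exfalso; lia.
move: dn; rewrite !inE negb_or => /andP[n1 n2].
exists (tail d), (tail (alpha d)); rewrite /del_sel n1 n2 andbT.
by rewrite andbT /adj; apply/existsP; exists d; rewrite !eqxx.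
Qed.

Hypothesis h4 : (4 <= #|V|)%N.

Lemma main_sec : chi1 (adj tail alpha) = 2%N.
Proof.
have [c hc] := coloring.
have [f0 [f0sel f0cov]] := selection.
have good : forall f : {ffun V -> option V}, exists2 u, True & exists v, irr_part (del_sel (adj tail alpha) f) u v.
  move=> f; have [u [v uv]] := edge_survives f h4; exists u => //; exists v.
  rewrite /irr_part uv andbT; apply/negP => /eqP e; move: uv; rewrite e.
  rewrite /del_sel => /andP[/existsP[d /andP[/eqP td /eqP tad]] _].
  by move: (hloop d); rewrite td tad eqxx.
have chi2 : chi (del_sel (adj tail alpha) f0) = 2%N.
  apply/eqP; rewrite eqn_leq; apply/andP; split; last first.
    by have [u _ [v uv]] := good f0; exact: chi_ge2 uv.
  apply: chi_le; apply/existsP.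
  exists [ffun v => if c v == 0 then (ord0 : 'I_2) else ord_max].
  apply/forallP => u; apply/forallP => v; apply/implyP => /andP[_ /and3P[/existsP[d /andP[/eqP td /eqP tad]] n1 n2]].
  have dS : d \in S.
    apply: contraT => dS; have := f0cov d dS; by rewrite td tad (negbTE n1) (negbTE n2).
  have := F2_cases (hc d dS); rewrite td tad !ffunE.
  by case: (c u == 0); case: (c v == 0).
rewrite /chi1; case: ex_minnP => k /existsP[f /andP[fsel /eqP fk]] kmin.
apply/eqP; rewrite eqn_leq; apply/andP; split.
  by apply: kmin; apply/existsP; exists f0; rewrite f0sel chi2 eqxx.
by rewrite -fk; have [u _ [v uv]] := good f; exact: chi_ge2 uv.
Qed.

End Map.


Local Close Scope ring_scope.
Unset Implicit Arguments.

Theorem proposition3p5 (V D : finType) (tail : D -> V) (alpha sigma : {perm D}) :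
  plane_triangulation tail alpha sigma ->
  4 <= #|V| ->
  (exists S : {set D}, dual_two_factor alpha sigma S /\ dual_ncomp alpha sigma S <= 2) ->
  chi1 (adj tail alpha) = 2.
Proof.
move=> [hAll [hS [hsurj [hloop [hsimple [hconn [heuler hface]]]]]]] h4 [S [[hSa hS2] hnc]].
have /card_gt0P[v0 _] : 0 < #|V| by apply: leq_trans h4.
have [d0 _] := hsurj v0.
exact: (main_sec (fun d => (hAll d).1) (fun d => (hAll d).2) hS hsurj hloop hsimple
          hconn heuler hface hSa hS2 hnc d0 h4).
Qed.
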